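(* Let $K$ be a field and $A$ a subring of $K$. Then the surjective map $\gamma:\mathrm{Zar}(K|A)\to\mathrm{Spec}(A)$, $V\mapsto M_V\cap A$, is continuous and closed when both $\mathrm{Zar}(K|A)$ and $\mathrm{Spec}(A)$ are endowed with their ultrafilter topologies.
   Context: $\mathrm{Zar}(K|A)$ denotes the set of all valuation rings of $K$ containing $A$; $M_V$ denotes the maximal ideal of $V$, and $M_V\cap A$ is the center of $V$ on $A$. A filter on a set $X$ is a nonempty collection of subsets of $X$ not containing $\emptyset$, closed under finite intersections and supersets; an ultrafilter is a maximal filter. Ultrafilter topology on $Z:=\mathrm{Zar}(K|A)$: for $x\in K$ let $B_x:=\{V\in Z\mid x\in V\}$; for $Y\subseteq Z$ nonempty and an ultrafilter $\mathscr U$ on $Y$ let $A_{\mathscr U,Y}:=\{x\in K\mid B_x\cap Y\in\mathscr U\}$ (a valuation domain in $Z$); the closed sets are the subsets $Y$ with $A_{\mathscr U,Y}\in Y$ for every ultrafilter $\mathscr U$ on $Y$. Ultrafilter topology on $X:=\mathrm{Spec}(A)$: for $a\in A$ let $V(a):=\{P\in X\mid a\in P\}$; for $C\subseteq X$ and an ultrafilter $\mathscr U$ on $C$, $P_{\mathscr U}:=\{a\in A\mid V(a)\cap C\in\mathscr U\}$ is a prime ideal of $A$ (an ultrafilter limit point of $C$); the closed sets are the subsets $C$ containing all their ultrafilter limit points. *)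

(* Defs.v *)
From HB Require Import structures.
From mathcomp Require Import all_boot all_order all_algebra.
From mathcomp Require Import boolp classical_sets.
Set Implicit Arguments. Unset Strict Implicit. Unset Printing Implicit Defensive.
Import GRing.Theory.
Local Open Scope ring_scope.
Local Open Scope classical_set_scope.

Definition is_subring (K : fieldType) (A : set K) : Prop :=
  A 0 /\ A 1 /\ (forall x y, A x -> A y -> A (x - y)) /\
  (forall x y, A x -> A y -> A (x * y)).

Definition is_valuation_ring (K : fieldType) (V : set K) : Prop :=
  is_subring V /\ (forall x : K, x != 0 -> V x \/ V x^-1).

Definition Zar (K : fieldType) (A : set K) : set (set K) :=
  [set V | is_valuation_ring V /\ A `<=` V].

(* M_V: the maximal ideal of the (local) ring V, i.e. its non-units. *)
Definition maxideal (K : fieldType) (V : set K) : set K :=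
  [set x | V x /\ ~ (exists y, V y /\ x * y = 1)].

Definition is_prime_ideal (K : fieldType) (A P : set K) : Prop :=
  P `<=` A /\ P 0 /\ (forall x y, P x -> P y -> P (x + y)) /\
  (forall a x, A a -> P x -> P (a * x)) /\ ~ P 1 /\
  (forall a b, A a -> A b -> P (a * b) -> P a \/ P b).

Definition Spec (K : fieldType) (A : set K) : set (set K) :=
  [set P | is_prime_ideal A P].

Definition center (K : fieldType) (A : set K) (V : set K) : set K :=
  maxideal V `&` A.

Definition is_filter_on (T : Type) (Y : set T) (F : set (set T)) : Prop :=
  (exists B, F B) /\ ~ F set0 /\ (forall B, F B -> B `<=` Y) /\
  (forall B C, F B -> F C -> F (B `&` C)) /\
  (forall B C, F B -> B `<=` C -> C `<=` Y -> F C).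

Definition is_ultrafilter_on (T : Type) (Y : set T) (U : set (set T)) : Prop :=
  is_filter_on Y U /\ (forall G, is_filter_on Y G -> U `<=` G -> G = U).

(* Ultrafilter topology on Zar(K|A). *)
Definition Bx (K : fieldType) (A : set K) (x : K) : set (set K) :=
  [set V | Zar A V /\ V x].

Definition zar_limit (K : fieldType) (A : set K) (U : set (set (set K)))
  (Y : set (set K)) : set K :=
  [set x | U (Bx A x `&` Y)].

Definition zar_ultra_closed (K : fieldType) (A : set K) (Y : set (set K)) : Prop :=
  Y `<=` Zar A /\
  (forall U, is_ultrafilter_on Y U -> Y (zar_limit A U Y)).

(* Ultrafilter topology on Spec(A). *)
Definition Vset (K : fieldType) (A : set K) (a : K) : set (set K) :=
  [set P | Spec A P /\ P a].

Definition spec_limit (K : fieldType) (A : set K) (U : set (set (set K)))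
  (C : set (set K)) : set K :=
  [set a | A a /\ U (Vset A a `&` C)].

Definition spec_ultra_closed (K : fieldType) (A : set K) (C : set (set K)) : Prop :=
  C `<=` Spec A /\
  (forall U, is_ultrafilter_on C U -> C (spec_limit A U C)).

(* Main.v *)
Require Import Defs.
From mathcomp Require Import all_boot all_order all_algebra.
From mathcomp Require Import boolp classical_sets.
Local Open Scope classical_set_scope.

Section Filt.
Variables (T : Type) (Y : set T).

Lemma filt_Y {U} : is_filter_on Y U -> U Y.
Proof.
move=> [[B UB] [_ [sub [_ sup]]]]; exact: (sup B Y UB (sub B UB)).
Qed.

Lemma filt_up {U X Z} : is_filter_on Y U -> U X -> X `<=` Z -> Z `<=` Y -> U Z.
Proof. by move=> [_ [_ [_ [_ sup]]]]; apply: sup. Qed.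

Lemma filt_I {U X Z} : is_filter_on Y U -> U X -> U Z -> U (X `&` Z).
Proof. by move=> [_ [_ [_ [I _]]]]; apply: I. Qed.

Lemma filt_sub {U X} : is_filter_on Y U -> U X -> X `<=` Y.
Proof. by move=> [_ [_ [sub _]]]; apply: sub. Qed.

Lemma filt_ne {U X} : is_filter_on Y U -> U X -> exists x, X x.
Proof.
move=> [_ [n0 _]] UX; apply: contra_notP n0 => h.
suff -> : set0 = X by [].
by apply/seteqP; split=> x // Xx; exfalso; apply: h; exists x.
Qed.

Lemma filt_ext {U B} : is_filter_on Y U -> B `<=` Y ->
  (forall X, U X -> exists x, X x /\ B x) ->
  is_filter_on Y [set Z | Z `<=` Y /\ exists X, U X /\ X `&` B `<=` Z] /\
  U `<=` [set Z | Z `<=` Y /\ exists X, U X /\ X `&` B `<=` Z] /\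
  [set Z | Z `<=` Y /\ exists X, U X /\ X `&` B `<=` Z] B.
Proof.
move=> fU sB meet; split; [|split].
- split; first by exists Y; split=> //; exists Y; split; [exact: filt_Y|by move=> x []].
  split; first by move=> [_ [X [UX sX]]]; have [x [Xx Bx]] := meet X UX; exact: (sX x).
  split; first by move=> Z [].
  split.
    move=> Z1 Z2 [s1 [X1 [U1 h1]]] [s2 [X2 [U2 h2]]]; split; first by move=> x [/s1].
    exists (X1 `&` X2); split; first exact: filt_I.
    by move=> x [[a b] c]; split; [apply: h1|apply: h2].
  move=> Z1 Z2 [s1 [X [UX h]]] s12 s2; split=> //; exists X; split=> //.
  by move=> x /h /s12.
- move=> X UX; split; first exact: filt_sub UX.
  by exists X; split=> // x [].
- by split=> //; exists Y; split; [exact: filt_Y|by move=> x []].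
Qed.

Lemma ultra_dich {U} : is_ultrafilter_on Y U ->
  forall B, B `<=` Y -> U B \/ U (Y `\` B).
Proof.
move=> [fU mx] B sB; case: (pselect (U (Y `\` B))) => h; first by right.
left.
have meet : forall X, U X -> exists x, X x /\ B x.
  move=> X UX; apply: contra_notP h => nm.
  apply: (filt_up fU UX) => [x Xx|x []//]; split; first exact: (filt_sub fU UX).
  by move=> Bx; apply: nm; exists x.
have [fG [sUG GB]] := filt_ext fU sB meet.
by rewrite -(mx _ fG sUG).
Qed.

Lemma filt_disj {U B} : is_filter_on Y U -> U B -> ~ U (Y `\` B).
Proof.
move=> fU UB UC; have := filt_I fU UB UC; move=> /(filt_ne fU) [x [? [_ ?]]]//.
Qed.

Lemma ultra_not {U B} : is_ultrafilter_on Y U -> B `<=` Y ->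
  (~ U B <-> U (Y `\` B)).
Proof.
move=> uU sB; split; first by case: (ultra_dich uU B sB).
by move=> h hB; apply: (filt_disj (proj1 uU) hB h).
Qed.

Lemma dich_ultra {U} : is_filter_on Y U ->
  (forall B, B `<=` Y -> U B \/ U (Y `\` B)) -> is_ultrafilter_on Y U.
Proof.
move=> fU dU; split=> // G fG sUG; apply/seteqP; split=> B GB; last exact: sUG.
have sB := filt_sub fG GB.
case: (dU B sB) => // /sUG GC; exfalso; exact: (filt_disj fG GB GC).
Qed.

Lemma ultra_exists {F} : is_filter_on Y F ->
  exists W, is_ultrafilter_on Y W /\ F `<=` W.
Proof.
move=> fF.
pose P := [set G : set (set T) | G = set0 \/ (is_filter_on Y G /\ F `<=` G)].
have [W [PW Wmax]] : exists W, P W /\ forall B, W `<` B -> ~ P B.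
  apply: Zorn_bigcup => Fam sP tot.
  case: (pselect (exists G, Fam G /\ G <> set0)) => [[G0 [FG0 G0n]]|hn]; last first.
    left; apply/seteqP; split=> // X [G FG GX]; apply: hn; exists G; split=> //.
    by move=> G0; rewrite G0 in GX.
  have fam_f : forall G, Fam G -> G <> set0 -> is_filter_on Y G /\ F `<=` G.
    by move=> G FG Gn; case: (sP G FG).
  have [fG0 sFG0] := fam_f G0 FG0 G0n.
  right; split; last by move=> X FX; exists G0 => //; exact: sFG0.
  have memf : forall G X, Fam G -> G X -> is_filter_on Y G.
    move=> G X FG GX; apply: (proj1 (fam_f G FG _)) => G0'.
    by rewrite G0' in GX.
  split; first by exists Y; exists G0 => //; exact: filt_Y.
  split; first by move=> [G FG G0']; have [_ [n _]] := memf _ _ FG G0'.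
  split; first by move=> B [G FG GB]; exact: (filt_sub (memf _ _ FG GB) GB).
  split.
    move=> B C [G1 F1 G1B] [G2 F2 G2C].
    case: (tot _ _ F1 F2) => s.
      exists G2 => //; apply: (filt_I (memf _ _ F2 G2C)) => //; exact: s.
    exists G1 => //; apply: (filt_I (memf _ _ F1 G1B)) => //; exact: s.
  move=> B C [G FG GB] sBC sC; exists G => //; exact: (filt_up (memf _ _ FG GB) GB).
have Wn : exists B, W B.
  case: (pselect (exists B, W B)) => // nW; exfalso.
  apply: (Wmax F); last exact: (or_intror (conj fF (fun _ h => h))).
  split; first by move=> B WB; exfalso; exact: (nW (ex_intro _ B WB)).
  move=> h; have [B FB] := proj1 fF; exact: (nW (ex_intro _ B (h B FB))).
have [fW sFW] : is_filter_on Y W /\ F `<=` W.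
  case: PW => // eqW; subst W; by case: Wn.
exists W; split=> //; apply: dich_ultra=> // B sB.
case: (pselect (W (Y `\` B))) => h; first by right.
left.
have meet : forall X, W X -> exists x, X x /\ B x.
  move=> X WX; apply: contra_notP h => nm.
  apply: (filt_up fW WX) => [x Xx|x []//]; split; first exact: (filt_sub fW WX).
  by move=> Bx; apply: nm; exists x.
have [fG [sWG GB]] := filt_ext fW sB meet.
apply: contra_notP (Wmax _ ^~ (or_intror (conj fG (subset_trans sFW sWG)))) => nWB.
split; first exact: sWG.
move=> hGW; apply: nWB; exact: hGW _ GB.
Qed.
End Filt.
Arguments filt_Y {T Y U}.
Arguments filt_up {T Y U X Z}.
Arguments filt_I {T Y U X Z}.
Arguments filt_sub {T Y U X}.
Arguments filt_ne {T Y U X}.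
Arguments filt_ext {T Y U B}.
Arguments ultra_dich {T Y U}.
Arguments filt_disj {T Y U B}.
Arguments ultra_not {T Y U B}.
Arguments dich_ultra {T Y U}.
Arguments ultra_exists {T Y F}.
From mathcomp Require Import ring.
Import GRing.Theory.
Local Open Scope ring_scope.
Local Open Scope classical_set_scope.

Lemma inI (T : Type) (A B : set T) x : A x -> B x -> (A `&` B) x.
Proof. by move=> a b; exact: (conj a b). Qed.

Section Val.
Variables (K : fieldType).

Lemma sr_add (V : set K) : is_subring V -> forall x y, V x -> V y -> V (x + y).
Proof.
move=> [V0 [V1 [Vs Vm]]] x y Vx Vy.
have := Vs x (0 - y) Vx (Vs 0 y V0 Vy); congr V; ring.
Qed.

Lemma sr_mul (V : set K) : is_subring V -> forall x y, V x -> V y -> V (x * y).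
Proof. by move=> [_ [_ [_ Vm]]]. Qed.

Lemma sr_sub (V : set K) : is_subring V -> forall x y, V x -> V y -> V (x - y).
Proof. by move=> [_ [_ [Vs _]]]. Qed.

Lemma sr_0 (V : set K) : is_subring V -> V 0.
Proof. by case. Qed.
Lemma sr_1 (V : set K) : is_subring V -> V 1.
Proof. by case=> _ []. Qed.

Lemma maxidealE (V : set K) x : maxideal V x <-> V x /\ (x = 0 \/ ~ V x^-1).
Proof.
split.
  move=> [Vx nu]; split=> //; case: (eqVneq x 0) => [->|xn0]; first by left.
  right=> Vi; apply: nu; exists x^-1; split=> //; exact: mulfV.
move=> [Vx h]; split=> // -[y [Vy xy]]; case: h => [x0|nVi].
  by move: xy; rewrite x0 mul0r => /eqP; rewrite eq_sym oner_eq0.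
have xn0 : x != 0 by apply/eqP => x0; move: xy; rewrite x0 mul0r => /eqP; rewrite eq_sym oner_eq0.
apply: nVi; suff -> : x^-1 = y by [].
by apply: (mulfI xn0); rewrite mulfV.
Qed.

Lemma center_prime (A V : set K) : is_subring A -> Zar A V -> Spec A (center A V).
Proof.
move=> hA [[sV vV] AV].
have Mx : forall x, maxideal V x <-> V x /\ (x = 0 \/ ~ V x^-1) by move=> x; exact: maxidealE.
split; first by move=> x [].
split; first by apply: inI; [apply/Mx; split; [exact: sr_0|left]|exact: sr_0].
split.
  move=> x y [/Mx [Vx hx] Ax] [/Mx [Vy hy] Ay]; apply: inI; last exact: sr_add.
  apply/Mx; split; first exact: sr_add.
  case: hx => [->|nx]; first by rewrite add0r.
  case: hy => [->|ny]; first by rewrite addr0; right.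
  case: (eqVneq (x + y) 0) => [->|sn0]; first by left.
  right => Vs.
  have xn0 : x != 0 by apply/eqP => x0; apply: nx; rewrite x0 invr0; exact: sr_0.
  have yn0 : y != 0 by apply/eqP => y0; apply: ny; rewrite y0 invr0; exact: sr_0.
  have xyn0 : x * y^-1 != 0 by rewrite mulf_neq0 // invr_eq0.
  case: (vV _ xyn0) => h.
    apply: ny; have -> : y^-1 = (x * y^-1 + 1) * (x + y)^-1 by field; rewrite ?sn0 ?yn0 ?xn0.
    apply: sr_mul => //; apply: sr_add => //; exact: sr_1.
  apply: nx; have -> : x^-1 = ((x * y^-1)^-1 + 1) * (x + y)^-1.
    by field; rewrite ?sn0 ?yn0 ?xn0.
  apply: sr_mul => //; apply: sr_add => //; exact: sr_1.
split.
  move=> a x Aa [/Mx [Vx hx] Ax]; apply: inI; last exact: sr_mul.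
  apply/Mx; split; first by apply: sr_mul => //; exact: AV.
  case: (eqVneq (a * x) 0) => [->|axn0]; first by left.
  right => Vi; case: hx => [x0|nx]; first by move: axn0; rewrite x0 mulr0 eqxx.
  apply: nx; have an0 : a != 0 by apply: contraNneq axn0 => ->; rewrite mul0r.
  have xn0 : x != 0 by apply: contraNneq axn0 => ->; rewrite mulr0.
  have -> : x^-1 = a * (a * x)^-1 by field; rewrite ?an0 ?xn0.
  apply: sr_mul => //; exact: AV.
split.
  move=> [/Mx [_ h] _]; case: h => [/eqP|]; first by rewrite oner_eq0.
  by rewrite invr1; apply; exact: sr_1.
move=> a b Aa Ab [/Mx [_ h] _].
case: (pselect (maxideal V a)) => ha; first by left.
case: (pselect (maxideal V b)) => hb; first by right.
exfalso; case: h => [/eqP|].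
  rewrite mulf_eq0 => /orP[/eqP a0|/eqP b0].
    by apply: ha; apply/Mx; split; [exact: AV|left].
  by apply: hb; apply/Mx; split; [exact: AV|left].
have Via : V a^-1.
  apply: contra_notP ha => nVa; apply/Mx; split; [exact: AV|by right].
have Vib : V b^-1.
  apply: contra_notP hb => nVb; apply/Mx; split; [exact: AV|by right].
by apply; rewrite invfM; apply: sr_mul.
Qed.
End Val.

Section Main.
Variables (K : fieldType) (A : set K) (hA : is_subring A).

Section Lim.
Variables (Y : set (set K)) (U : set (set (set K))).
Hypotheses (sY : Y `<=` Zar A) (uU : is_ultrafilter_on Y U).
Let fU := proj1 uU.
Let L := zar_limit A U Y.

Lemma lim_all x : (forall V, Y V -> V x) -> L x.
Proof.
move=> h; rewrite /L /zar_limit /=.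
apply: (filt_up fU (filt_Y fU)) => [V YV|V [] //].
apply: inI => //; split; [exact: sY|exact: h].
Qed.

Lemma lim_zar : Zar A L.
Proof.
split; last by move=> a Aa; apply: lim_all => V /sY [_ AV]; exact: AV.
split.
  split; first by apply: lim_all => V /sY [[sV _] _]; exact: sr_0.
  split; first by apply: lim_all => V /sY [[sV _] _]; exact: sr_1.
  split.
    move=> x y; rewrite /L /zar_limit /= => Ux Uy.
    apply: (filt_up fU (filt_I fU Ux Uy)) => [V [[[zV Vx] YV] [[_ Vy] _]]|V [] //].
    apply: inI => //; split => //; case: zV => [[sV _] _]; exact: sr_sub.
  move=> x y; rewrite /L /zar_limit /= => Ux Uy.
  apply: (filt_up fU (filt_I fU Ux Uy)) => [V [[[zV Vx] YV] [[_ Vy] _]]|V [] //].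
  apply: inI => //; split => //; case: zV => [[sV _] _]; exact: sr_mul.
move=> x xn0; rewrite /L /zar_limit /=.
have sB : Bx A x `&` Y `<=` Y by move=> V [].
case: (ultra_dich uU _ sB) => h; [left=> //|right].
apply: (filt_up fU h) => [V [YV nB]|V [] //].
have zV := sY _ YV; apply: inI => //; split => //.
case: zV => [[_ vV] _]; case: (vV x xn0) => // Vx; exfalso; apply: nB.
by apply: inI => //; split => //; exact: sY.
Qed.

Lemma lim_center a : A a ->
  (maxideal L a <-> U [set V | Y V /\ maxideal V a]).
Proof.
move=> Aa; have La : L a by apply: lim_all => V /sY [_ AV]; exact: AV.
have sS : [set V | Y V /\ maxideal V a] `<=` Y by move=> V [].
rewrite maxidealE; split.
  move=> [_ [a0|nL]].
    apply: (filt_up fU (filt_Y fU)) => // V YV; split => //.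
    apply/maxidealE; split; first by case: (sY _ YV) => _; apply.
    by left.
  move: nL; rewrite /L /zar_limit /=.
  have sB : Bx A a^-1 `&` Y `<=` Y by move=> V [].
  move/(ultra_not uU sB) => h.
  apply: (filt_up fU h) => // V [YV nB]; split => //; apply/maxidealE.
  split; first by case: (sY _ YV) => _; apply.
  right => Vi; apply: nB; apply: inI => //; split => //; exact: sY.
move=> US; split => //; case: (eqVneq a 0) => [->|an0]; first by left.
right; rewrite /L /zar_limit /= => UB.
have := filt_I fU UB US; move/(filt_ne fU) => [V [[[_ Vi] _] [_ /maxidealE [_ [a0|]]]]].
  by move: an0; rewrite a0 eqxx.
by apply.
Qed.
End Lim.

End Main.
Arguments lim_zar {K A Y U}.
Arguments lim_center {K A Y U}.

Theorem theorem3p9 (K : fieldType) (A : set K) (hA : is_subring A) :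
  (* gamma maps Zar(K|A) into Spec(A) *)
  (forall V, Zar A V -> Spec A (center A V)) /\
  (* continuity: preimages of closed sets are closed *)
  (forall C, spec_ultra_closed A C ->
     zar_ultra_closed A [set V | Zar A V /\ C (center A V)]) /\
  (* closedness: images of closed sets are closed *)
  (forall Y, zar_ultra_closed A Y -> spec_ultra_closed A (center A @` Y)).
Proof.
split; first by move=> V; exact: center_prime.
split.
  move=> C [sC cC].
  set Y0 := [set V | Zar A V /\ C (center A V)].
  split; first by move=> V [].
  move=> U uU; have sY : Y0 `<=` Zar A by move=> V [].
  have fU := proj1 uU.
  have zL := lim_zar sY uU.
  pose U' := [set D | D `<=` C /\ U [set V | Y0 V /\ D (center A V)]].
  have uU' : is_ultrafilter_on C U'.
    apply: dich_ultra.
      split.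
        exists C; split => //; apply: (filt_up fU (filt_Y fU)) => [V YV|V []//].
        by split => //; case: YV.
      split; first by move=> [_ h]; have [V [_ []]] := filt_ne fU h.
      split; first by move=> D [].
      split.
        move=> D1 D2 [s1 h1] [s2 h2]; split; first by move=> P [/s1].
        apply: (filt_up fU (filt_I fU h1 h2)) => [V [[a b] [c d]]|V []//].
        by split => //; apply: inI.
      move=> D1 D2 [s1 h1] s12 s2; split => //.
      apply: (filt_up fU h1) => [V [a b]|V []//]; split => //; exact: s12.
    move=> B sB.
    have sS : [set V | Y0 V /\ B (center A V)] `<=` Y0 by move=> V [].
    case: (ultra_dich uU _ sS) => h; [left|right]; split => //; try by move=> P [].
    apply: (filt_up fU h) => [V [YV nS]|V []//]; split => //; split.
      by case: YV.
    by move=> Bc; apply: nS; split.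
  suff e : spec_limit A U' C = center A (zar_limit A U Y0).
    by split => //; rewrite -e; apply: cC.
  apply/seteqP; split => a.
    move=> [Aa [sD hD]]; apply: inI => //.
    apply: (proj2 (lim_center sY uU _ Aa)).
    apply: (filt_up fU hD) => [V [Y0V [[_ ca] _]]|V []//]; split => //.
    by case: ca.
  move=> [mL Aa]; split => //; split; first by move=> P [].
  have := (lim_center sY uU _ Aa).1 mL.
  move=> h; apply: (filt_up fU h) => [V [Y0V mV]|V []//]; split => //.
  apply: inI; last by case: Y0V.
  split; last by apply: inI.
  by apply: center_prime => //; case: Y0V.
move=> Y [sY cY]; split.
  by move=> P [V YV <-]; apply: center_prime => //; exact: sY.
move=> U uU; set C0 := center A @` Y; have fU := proj1 uU.
pose F := [set Z | Z `<=` Y /\ exists D, U D /\ [set V | Y V /\ D (center A V)] `<=` Z].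
have fF : is_filter_on Y F.
  split.
    exists Y; split => //; have [D UD] := proj1 fU; exists D; split => //.
    by move=> V [].
  split.
    move=> [_ [D [UD sD]]]; have [P DP] := filt_ne fU UD.
    have [V YV eP] := filt_sub fU UD _ DP.
    by apply: (sD V); split => //; rewrite eP.
  split; first by move=> Z [].
  split.
    move=> Z1 Z2 [s1 [D1 [U1 h1]]] [s2 [D2 [U2 h2]]]; split; first by move=> V [/s1].
    exists (D1 `&` D2); split; first exact: (filt_I fU U1 U2).
    move=> V [YV [d1 d2]]; split; [apply: h1|apply: h2]; by split.
  move=> Z1 Z2 [s1 [D [UD h]]] s12 s2; split => //; exists D; split => //.
  by move=> V /h /s12.
have [W [uW sFW]] := ultra_exists fF.
have fW := proj1 uW.
have YL := cY W uW.
exists (zar_limit A W Y) => //.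
apply/seteqP; split => a.
  move=> [mL Aa]; split => //.
  have hW := (lim_center sY uW _ Aa).1 mL.
  case: (pselect (U (Vset A a `&` C0))) => // nU; exfalso.
  have sB : Vset A a `&` C0 `<=` C0 by move=> P [].
  have h := (ultra_not uU sB).1 nU.
  have FW : W [set V | Y V /\ ~ maxideal V a].
    apply: sFW; split; first by move=> V [].
    exists (C0 `\` (Vset A a `&` C0)); split => //.
    move=> V [YV [_ nv]]; split => // mV; apply: nv; apply: inI.
      split; last by apply: inI.
      by apply: center_prime => //; exact: sY.
    by exists V.
  have := filt_I fW hW FW; move/(filt_ne fW) => [V [[_ m] [_ nm]]]; exact: nm m.
move=> [Aa UV]; apply: inI => //; apply: (proj2 (lim_center sY uW _ Aa)).
apply: sFW; split; first by move=> V [].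
exists (Vset A a `&` C0); split => //.
by move=> V [YV [[_ [m _]] _]]; split.
Qed.
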